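(* For every approval-based multi-winner election $\sigma=\langle\mathcal V,\mathcal C,S,B\rangle$ and every non-empty $\mathcal A\subseteq\mathcal C$, there exists a non-empty $\mathcal K\subseteq\mathcal A$ with the following two properties: 1. $\mathrm{Supp}_F(c)=\mathrm{maxMin}(\sigma,\mathcal A)$ for every $F\in\mathfrak F^{\mathrm{opt}}_{\sigma,\mathcal A}$ and every $c\in\mathcal K$; 2. $\displaystyle\mathrm{maxMin}(\sigma,\mathcal A)=\frac{\sum_{y\in2^{\mathcal C}:\,y\cap\mathcal K\neq\emptyset}B(y)}{|\mathcal K|}$.
   Context: An approval-based multi-winner election is a tuple $\sigma=\langle \mathcal V,\mathcal C,S,B\rangle$, where $\mathcal V$ is a finite set of agents, $\mathcal C$ is a finite set of candidates, $1\le S\le|\mathcal C|$ is an integer, and $B:2^{\mathcal C}\to\mathbb N$ gives, for each $\mathcal A\subseteq\mathcal C$, the number $B(\mathcal A)$ of agents whose ballot is exactly $\mathcal A$ (with $\sum_{\mathcal A}B(\mathcal A)\le|\mathcal V|$). For a non-empty $\mathcal A\subseteq\mathcal C$, the family $\mathfrak F_{\sigma,\mathcal A}$ is the set of all $F:2^{\mathcal C}\times\mathcal A\to\mathbb R$ such that: - $F(y,c)\ge0$ for all $y$ and $c$; - $F(y,c)=0$ if $c\notin y$; - $\sum_{c\in\mathcal A\cap y}F(y,c)=B(y)$ whenever $y\cap\mathcal A\neq\emptyset$. We write $\mathrm{Supp}_F(c)=\sum_yF(y,c)$ and $\mathrm{maxMin}(\sigma,\mathcal A)=\sup_{F\in\mathfrak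 F_{\sigma,\mathcal A}}\min_{c\in\mathcal A}\mathrm{Supp}_F(c)$. We also write $\mathfrak F^{\mathrm{opt}}_{\sigma,\mathcal A}=\{F\in\mathfrak F_{\sigma,\mathcal A}:\mathrm{Supp}_F(c)\ge\mathrm{maxMin}(\sigma,\mathcal A)\ \forall c\in\mathcal A\}$. *)

(* Defs.v *)
From HB Require Import structures.
From mathcomp Require Import all_boot all_order all_algebra.
Set Implicit Arguments. Unset Strict Implicit. Unset Printing Implicit Defensive.
Import Order.TTheory GRing.Theory Num.Theory.
Local Open Scope ring_scope.

(* An election: agents V (a finType), candidates C (a finType),
   committee size S, ballot counts B : {set C} -> nat. *)
Definition is_election (V C : finType) (S : nat) (B : {set C} -> nat) : Prop :=
  (1 <= S <= #|C|)%N /\ (\sum_(A : {set C}) B A <= #|V|)%N.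

(* The family F_{sigma,A}; F is given as a total function, only its values
   at candidates c \in A matter. *)
Definition in_family (R : realFieldType) (C : finType) (B : {set C} -> nat)
    (A : {set C}) (F : {set C} -> C -> R) : Prop :=
  [/\ forall y c, c \in A -> 0 <= F y c,
      forall (y : {set C}) c, c \in A -> c \notin y -> F y c = 0 &
      forall y, y :&: A != set0 -> \sum_(c in A :&: y) F y c = (B y)%:R].

Definition Supp (R : realFieldType) (C : finType) (F : {set C} -> C -> R) (c : C) : R :=
  \sum_(y : {set C}) F y c.

Definition is_minSupp (R : realFieldType) (C : finType) (A : {set C})
    (F : {set C} -> C -> R) (v : R) : Prop :=
  (exists2 c, c \in A & Supp F c = v) /\ (forall c, c \in A -> v <= Supp F c).

Definition is_maxMin (R : realFieldType) (C : finType) (B : {set C} -> nat)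
    (A : {set C}) (m : R) : Prop :=
  (forall F v, in_family B A F -> is_minSupp A F v -> v <= m) /\
  (forall m', (forall F v, in_family B A F -> is_minSupp A F v -> v <= m') -> m <= m').

Definition in_opt (R : realFieldType) (C : finType) (B : {set C} -> nat)
    (A : {set C}) (m : R) (F : {set C} -> C -> R) : Prop :=
  in_family B A F /\ (forall c, c \in A -> m <= Supp F c).

(* Main.v *)
Require Import Defs.
From HB Require Import structures.
From mathcomp Require Import all_boot all_order all_algebra.
From mathcomp Require Import zify ring lra.
Set Implicit Arguments. Unset Strict Implicit. Unset Printing Implicit Defensive.
Import Order.TTheory GRing.Theory Num.Theory.
Local Open Scope ring_scope.

Section Gale.
Variable R : realFieldType.
Variable C : finType.

Definition Nw (w : {set C} -> R) (K : {set C}) : R := \sum_(y | y :&: K != set0) w y.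

Definition isflow (A : {set C}) (w : {set C} -> R) (d : C -> R) (F : {set C} -> C -> R) :=
  [/\ forall y c, c \in A -> 0 <= F y c,
      forall (y : {set C}) c, c \in A -> c \notin y -> F y c = 0,
      forall y, y :&: A != set0 -> \sum_(c in A :&: y) F y c = w y &
      forall c, c \in A -> d c <= Supp F c].

Definition gcond (A : {set C}) (w : {set C} -> R) (d : C -> R) :=
  forall K : {set C}, K \subset A -> \sum_(x in K) d x <= Nw w K.

Lemma sum_if_eqT (T : finType) (j : T) (a : R) :
  \sum_(i : T) (if i == j then a else 0) = a.
Proof.
by rewrite (bigD1 j) //= eqxx big1 ?addr0 // => i /negbTE ->.
Qed.

Lemma sum_if_eqS (T : finType) (S : {set T}) (j : T) (a : R) :
  \sum_(i in S) (if i == j then a else 0) = if j \in S then a else 0.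
Proof.
case: (boolP (j \in S)) => jS.
  by rewrite (bigD1 j) //= eqxx big1 ?addr0 // => i /andP[_ /negbTE ->].
by rewrite big1 // => i iS; case: eqP => // ij; rewrite -ij iS in jS.
Qed.

Lemma meetS (z K K' : {set C}) : K' \subset K -> z :&: K' != set0 -> z :&: K != set0.
Proof.
move=> sub /set0Pn [x]; rewrite inE => /andP [xz xK'].
by apply/set0Pn; exists x; rewrite inE xz (subsetP sub).
Qed.

Lemma meet1 (z : {set C}) c : (z :&: [set c] != set0) = (c \in z).
Proof.
apply/set0Pn/idP => [[x]|cz]; first by rewrite !inE => /andP [xz /eqP <-].
by exists c; rewrite !inE cz eqxx.
Qed.

Lemma flow_empty (A : {set C}) w d : A = set0 -> exists F, isflow A w d F.
Proof.
move=> ->; exists (fun _ _ => 0); split => [y c|y c|y|c]; rewrite ?inE //.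
by rewrite setI0 eqxx.
Qed.


Section Reduce.
Variable A : {set C}.
Hypothesis IH : forall (A' : {set C}) (w : {set C} -> R) (d : C -> R), (#|A'| < #|A|)%N -> (forall z, 0 <= w z) ->
  gcond A' w d -> exists F, isflow A' w d F.

Lemma reduce_tight (w : {set C} -> R) (d : C -> R) (K : {set C}) : (forall z, 0 <= w z) -> gcond A w d ->
  K != set0 -> K \proper A -> Nw w K <= \sum_(x in K) d x -> exists F, isflow A w d F.
Proof.
move=> w0 hc Kn0 KA tight.
have sKA : K \subset A by move/properP: KA => [].
have c1 : (#|K| < #|A|)%N by apply: proper_card.
have c2 : (#|A :\: K| < #|A|)%N.
  rewrite cardsDS //; have h : (0 < #|K|)%N by rewrite card_gt0.
  have := subset_leq_card sKA; lia.
pose w1 (z : {set C}) : R := if z :&: K != set0 then w z else 0.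
pose w2 (z : {set C}) : R := if z :&: K == set0 then w z else 0.
have [||F1 [F1p F1z F1s F1d]] := IH (A' := K) (w := w1) (d := d) c1.
- by move=> z; rewrite /w1; case: ifP.
- move=> K' sK'; rewrite /Nw (eq_bigr w) ?hc //; last first.
    by move=> z zK; rewrite /w1 (meetS sK' zK).
  exact: subset_trans sKA.
have [||F2 [F2p F2z F2s F2d]] := IH (A' := A :\: K) (w := w2) (d := d) c2.
- by move=> z; rewrite /w2; case: ifP.
- move=> K' sK'.
  have sK'A : K' \subset A by apply: subset_trans sK' (subsetDl _ _).
  have dis : [disjoint K' & K].
    apply/pred0P => x /=; apply/negbTE/negP => /andP [xK' xK].
    by have := subsetP sK' x xK'; rewrite inE xK.
  have hU := hc (K' :|: K) ltac:(by rewrite subUset sK'A sKA).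
  have eU : \sum_(x in K' :|: K) d x = \sum_(x in K') d x + \sum_(x in K) d x.
    by rewrite -bigU //; apply: eq_bigl => x; rewrite !inE.
  have eN : Nw w (K' :|: K) = Nw w2 K' + Nw w K.
    rewrite /Nw (bigID (fun z => z :&: K != set0)) /= addrC; congr (_ + _).
      rewrite /w2 -big_mkcondr; apply: eq_bigl => z; rewrite setIUr setU_eq0.
      by case: (z :&: K' == set0); case: (z :&: K == set0).
    apply: eq_bigl => z; rewrite setIUr setU_eq0.
    by case: (z :&: K' == set0); case: (z :&: K == set0).
  rewrite eU eN in hU; lra.
exists (fun z x => if x \in K then F1 z x else F2 z x); split.
- move=> z x xA; case: ifP => xK; first exact: F1p.
  by apply: F2p; rewrite inE xK xA.
- move=> z x xA xz; case: ifP => xK; first exact: F1z.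
  by apply: F2z; rewrite ?inE ?xK ?xA.
- move=> z zA.
  rewrite (bigID (fun x => x \in K)) /=.
  rewrite (eq_bigl (fun x => x \in K :&: z)); last first.
    by move=> x; rewrite !inE; case: (boolP (x \in K)) => xK;
      rewrite ?andbT ?andbF // (subsetP sKA x xK).
  rewrite (eq_bigr (F1 z)); last by move=> x; rewrite inE => /andP [-> _].
  rewrite [X in _ + X](eq_bigl (fun x => x \in (A :\: K) :&: z)); last first.
    by move=> x; rewrite !inE; case: (x \in K); rewrite ?andbT ?andbF.
  rewrite [X in _ + X](eq_bigr (F2 z)); last first.
    by move=> x; rewrite !inE => /andP [/andP [/negbTE -> _] _].
  case: (boolP (z :&: K == set0)) => zK.
    rewrite setIC (eqP zK) big_set0 add0r F2s /w2 ?zK //.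
    move: zA => /set0Pn [x]; rewrite inE => /andP [xz xA].
    apply/set0Pn; exists x; rewrite !inE xz xA /= andbT.
    apply/negP => xK; move/eqP: zK => /setP /(_ x); by rewrite !inE xz xK.
  rewrite F1s // /w1 zK.
  case: (boolP (z :&: (A :\: K) == set0)) => zAK.
    by rewrite setIC (eqP zAK) big_set0 addr0.
  by rewrite F2s // /w2 (negbTE zK) addr0.
- move=> x xA; rewrite /Supp; case: (boolP (x \in K)) => xK.
    by rewrite (eq_bigr (fun z => F1 z x)) ?F1d // => z _; rewrite xK.
  rewrite (eq_bigr (fun z => F2 z x)) ?F2d ?inE ?xK // => z _.
Qed.

Lemma reduce_zero (w : {set C} -> R) (d : C -> R) c : (forall z, 0 <= w z) -> gcond A w d ->
  c \in A -> d c <= 0 -> exists F, isflow A w d F.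
Proof.
move=> w0 hc cA dc.
set A' := A :\ c.
have c1 : (#|A'| < #|A|)%N by rewrite [X in (_ < X)%N](cardsD1 c) cA.
have [||F' [Fp Fz Fs Fd]] := IH (A' := A') (w := w) (d := d) c1 => //.
  by move=> K sK; apply: hc; apply: subset_trans sK (subsetDl _ _).
exists (fun z x => if x == c then (if (z :&: A' == set0) && (c \in z) then w z else 0)
                   else F' z x); split.
- move=> z x xA; case: eqP => xc; first by case: ifP.
  by apply: Fp; rewrite !inE xA andbT; apply/eqP.
- move=> z x xA xz; case: eqP => xc.
    by rewrite -xc (negbTE xz) andbF.
  by apply: Fz => //; rewrite !inE xA andbT; apply/eqP.
- move=> z zA; case: (boolP (c \in z)) => cz.
    rewrite (bigD1 c) /=; last by rewrite inE cA cz.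
    rewrite /= eqxx andbT.
    rewrite (eq_bigl (fun x => x \in A' :&: z)); last first.
      by move=> x; rewrite !inE; case: (x == c); rewrite ?andbF ?andbT.
    rewrite (eq_bigr (F' z)); last first.
      by move=> x; rewrite !inE => /andP [/andP [/negbTE -> _] _].
    case: (boolP (z :&: A' == set0)) => zA'.
      by rewrite setIC (eqP zA') big_set0 addr0.
    by rewrite Fs // add0r.
  have zA' : z :&: A' != set0.
    move: zA => /set0Pn [x]; rewrite inE => /andP [xz xA].
    apply/set0Pn; exists x; rewrite !inE xz xA andbT /=.
    by apply/eqP => xc; rewrite -xc xz in cz.
  rewrite -Fs //; apply: eq_big => x.
    rewrite !inE; case: eqP => // ->; by rewrite (negbTE cz) !andbF.
  rewrite inE => /andP [_ xz]; case: eqP => // xc.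
  by rewrite -xc xz in cz.
- move=> x xA; rewrite /Supp; case: eqP => xc.
    rewrite xc; apply: (le_trans dc); apply: sumr_ge0 => z _; by case: ifP.
  rewrite (eq_bigr (fun z => F' z x)); last by [].
  by apply: Fd; rewrite !inE xA andbT; apply/eqP.
Qed.
End Reduce.

Lemma sum_if_eqP (T : finType) (P : pred T) (j : T) (a : R) :
  \sum_(i | P i) (if i == j then a else 0) = if P j then a else 0.
Proof.
case: (boolP (P j)) => jS.
  by rewrite (bigD1 j) //= eqxx big1 ?addr0 // => i /andP[_ /negbTE ->].
by rewrite big1 // => i iS; case: eqP => // ij; rewrite -ij iS in jS.
Qed.

Lemma bigmin_le_idx (I : Type) (r : seq I) (P : pred I) (F : I -> R) (x : R) :
  \big[Num.min/x]_(i <- r | P i) F i <= x.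
Proof.
elim: r => [|i r IHr]; first by rewrite big_nil.
by rewrite big_cons; case: (P i) => //; rewrite ge_min IHr orbT.
Qed.

Lemma bigmin_le_term (I : eqType) (r : seq I) (P : pred I) (F : I -> R) (x : R) j :
  j \in r -> P j -> \big[Num.min/x]_(i <- r | P i) F i <= F j.
Proof.
elim: r => [//|i r IHr]; rewrite in_cons => /orP [/eqP -> Pj|jr Pj].
  by rewrite big_cons Pj ge_min lexx.
rewrite big_cons; case: (P i); last exact: IHr.
by rewrite ge_min IHr ?orbT.
Qed.

Lemma gale n : forall (A : {set C}) (w : {set C} -> R) (d : C -> R),
  (#|A| <= n)%N -> (forall z, 0 <= w z) -> gcond A w d -> exists F, isflow A w d F.
Proof.
elim: n => [|n IHn] A w d hA w0 hc.
  by apply: flow_empty; apply/eqP; rewrite -cards_eq0; apply/eqP; lia.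
have IH : forall (A' : {set C}) (w : {set C} -> R) (d : C -> R), (#|A'| < #|A|)%N ->
    (forall z, 0 <= w z) -> gcond A' w d -> exists F, isflow A' w d F.
  by move=> A' w' d' h; apply: IHn; lia.
suff inner : forall k (w : {set C} -> R) (d : C -> R),
    (#|[set z | (0 < w z)%R]| < k)%N -> (forall z, 0 <= w z) -> gcond A w d ->
    exists F, isflow A w d F.
  exact: (inner (#|[set z | (0 < w z)%R]|).+1).
elim=> [//|k IHk] {}w {}d hk {}w0 {}hc.
case: (set_0Vmem A) => [->|[c cA]]; first exact: flow_empty.
case: (boolP [exists K : {set C}, [&& K != set0, K \proper A & Nw w K <= \sum_(x in K) d x]]).
  by move/existsP => [K /and3P [h1 h2 h3]]; apply: (reduce_tight IH w0 hc h1 h2 h3).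
move/existsPn => notight.
case: (lerP (d c) 0) => dc; first exact: (reduce_zero IH w0 hc cA dc).
have strict : forall K : {set C}, K != set0 -> K \proper A -> \sum_(x in K) d x < Nw w K.
  by move=> K h1 h2; have := notight K; rewrite h1 h2 /= ltNge.
have [y cy wy] : exists2 y : {set C}, c \in y & 0 < w y.
  case: (boolP [exists y : {set C}, (c \in y) && (0 < w y)]) =>
    [/existsP [y /andP [? ?]]|/existsPn H]; first by exists y.
  have := hc [set c]; rewrite sub1set cA big_set1 => /(_ isT) h.
  have : Nw w [set c] <= 0.
    apply: sumr_le0 => z; rewrite meet1 => cz.
    by have := H z; rewrite cz /= -leNgt.
  lra.
pose P (K : {set C}) := [&& K \proper A, c \notin K & y :&: K != set0].
pose slack (K : {set C}) := Nw w K - \sum_(x in K) d x.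
pose m := Num.min (w y) (d c).
pose del := \big[Num.min/m]_(K | P K) slack K.
have dpos : 0 < del.
  apply: (big_ind (fun x => 0 < x)).
  - by rewrite lt_min wy dc.
  - by move=> a b ha hb; rewrite lt_min ha hb.
  move=> K /and3P [h1 h2 h3]; rewrite subr_gt0; apply: strict h1.
  by apply: contraNneq h3 => ->; rewrite setI0.
have dm : del <= m by apply: bigmin_le_idx.
have dwy : del <= w y by apply: (le_trans dm); rewrite ge_min lexx.
have ddc : del <= d c by apply: (le_trans dm); rewrite ge_min lexx orbT.
have dsl : forall K, P K -> del <= slack K.
  by move=> K PK; apply: bigmin_le_term => //; rewrite mem_index_enum.
have dcase : [\/ del = w y, del = d c | exists2 K, P K & del = slack K].
  have : del = m \/ exists2 K, P K & del = slack K.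
    apply: (big_ind (fun x => x = m \/ exists2 K, P K & x = slack K)).
    - by left.
    - by move=> a b ha hb; case: (leP a b).
    by move=> K PK; right; exists K.
  case=> [->|]; last by move=> ?; apply: Or33.
  by rewrite /m; case: (leP (w y) (d c)) => h; [apply: Or31|apply: Or32].
pose w' (z : {set C}) : R := if z == y then w y - del else w z.
pose d' (x : C) : R := if x == c then d c - del else d x.
have w'0 : forall z, 0 <= w' z.
  by move=> z; rewrite /w'; case: eqP => _; rewrite ?subr_ge0.
have sd' : forall K : {set C}, \sum_(x in K) d' x = \sum_(x in K) d x - (if c \in K then del else 0).
  move=> K; rewrite -(sum_if_eqP (fun x => x \in K) c del) -sumrB.
  by apply: eq_bigr => x _; rewrite /d'; case: eqP => [->|_]; rewrite ?subr0.
have sw' : forall K : {set C}, Nw w' K = Nw w K - (if y :&: K != set0 then del else 0).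
  move=> K; rewrite /Nw -(sum_if_eqP (fun z => z :&: K != set0) y del) -sumrB.
  by apply: eq_bigr => z _; rewrite /w'; case: eqP => [->|_]; rewrite ?subr0.
have hc' : gcond A w' d'.
  move=> K sK; rewrite sd' sw'; have := hc K sK.
  case: (boolP (c \in K)) => cK.
    have -> : y :&: K != set0 by apply/set0Pn; exists c; rewrite inE cy cK.
    lra.
  case: (boolP (y :&: K != set0)) => yK; last lra.
  have KA : K != A by apply/eqP => KA; rewrite KA cA in cK.
  have PK : P K by rewrite /P properEneq KA sK cK yK.
  have := dsl K PK; rewrite /slack; lra.
suff [F' [Fp Fz Fs Fd]] : exists F, isflow A w' d' F.
  exists (fun z x => F' z x + (if (z == y) && (x == c) then del else 0)); split.
  - move=> z x xA; rewrite addr_ge0 ?Fp //; case: ifP => _ //; exact: ltW.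
  - move=> z x xA xz; rewrite Fz // add0r; case: eqP => // zy; case: eqP => // xc.
    by rewrite zy xc cy in xz.
  - move=> z zA; rewrite big_split /= Fs //.
    rewrite (eq_bigr (fun x => if x == c then (if z == y then del else 0) else 0)); last first.
      by move=> x _; case: (z == y); case: (x == c).
    rewrite sum_if_eqP /w'; case: eqP => [->|_]; first by rewrite inE cA cy subrK.
    by case: ifP; rewrite addr0.
  - move=> x xA; rewrite /Supp big_split /=; have := Fd x xA; rewrite /Supp.
    rewrite [X in _ + X](eq_bigr (fun z => if z == y then (if x == c then del else 0) else 0)); last first.
      by move=> z _; case: (z == y); case: (x == c).
    by rewrite sum_if_eqP /d' /=; case: eqP => [->|_]; lra.
case: dcase => [dw|dd|[K0 PK0 ds]].
- apply: (IHk w' d') => //.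
  rewrite -ltnS; apply: leq_trans hk; rewrite ltnS; apply: proper_card.
  apply/properP; split.
    apply/subsetP => z; rewrite !inE /w'; case: eqP => // ->.
    by rewrite dw subrr ltxx.
  by exists y; rewrite !inE ?wy // /w' /= eqxx dw subrr ltxx.
- apply: (reduce_zero IH w'0 hc' cA); rewrite /d' eqxx dd subrr lexx //.
- move: PK0 => /and3P [h1 h2 h3].
  apply: (reduce_tight IH w'0 hc' (K := K0)) => //.
    by apply: contraNneq h3 => ->; rewrite setI0.
  rewrite sd' sw' h3 (negbTE h2); move: ds; rewrite /slack; lra.
Qed.
End Gale.

Unset Implicit Arguments.

Lemma supp_le (R : realFieldType) (C : finType) (B : {set C} -> nat) (A K : {set C})
    (F : {set C} -> C -> R) :
  in_family B A F -> K \subset A ->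
  \sum_(c in K) Supp F c <= Nw (fun y => (B y)%:R) K.
Proof.
move=> [Fp Fz Fs] sKA.
rewrite /Supp exchange_big /= (bigID (fun y : {set C} => y :&: K != set0)) /=.
rewrite [X in _ + X]big1 ?addr0; last first.
  move=> y; rewrite negbK => /eqP yK; apply: big1 => c cK.
  apply: Fz; first exact: (subsetP sKA).
  apply/negP => cy; move/setP: yK => /(_ c); by rewrite !inE cy cK.
apply: ler_sum => y yK.
rewrite -(Fs y (meetS sKA yK)).
have e1 : \sum_(c in K) F y c = \sum_(c in A :&: y | c \in K) F y c.
  rewrite (bigID (fun c => c \in y)) /= [X in _ + X]big1 ?addr0; last first.
    by move=> c /andP [cK cy]; apply: Fz => //; exact: (subsetP sKA c cK).
  by apply: eq_bigl => c; rewrite !inE; case: (boolP (c \in K)) => cK;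
    rewrite ?andbF ?andbT // (subsetP sKA c cK).
rewrite e1 [X in _ <= X](bigID (fun c => c \in K)) /= lerDl sumr_ge0 // => c.
by rewrite inE => /andP [/andP [cA _] _]; apply: Fp.
Qed.

Theorem corollary1 (R : realFieldType) (V C : finType) (S : nat)
    (B : {set C} -> nat) (A : {set C}) :
  is_election V S B -> A != set0 ->
  exists m : R, is_maxMin B A m /\
    exists K : {set C},
      [/\ K != set0, K \subset A,
          (forall F c, in_opt B A m F -> c \in K -> Supp F c = m) &
          m = (\sum_(y : {set C} | y :&: K != set0) (B y)%:R) / (#|K|%:R)].
Proof.
move=> _ An0.
pose w (y : {set C}) : R := (B y)%:R.
pose ratio (K : {set C}) : R := Nw w K / #|K|%:R.
have [a aA] := set0Pn _ An0.
have [K /andP [Kn0 KA] Kmin] : exists2 K : {set C}, (K != set0) && (K \subset A) &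
    forall K', (K' != set0) && (K' \subset A) -> ratio K <= ratio K'.
  case: (@arg_minP _ _ _ A (fun K : {set C} => (K != set0) && (K \subset A)) ratio);
    first by rewrite An0 subxx.
  by move=> K PK H; exists K.
set m := ratio K.
have cardpos : forall K' : {set C}, K' != set0 -> 0 < (#|K'|%:R : R).
  by move=> K' h; rewrite ltr0n card_gt0.
have hmin : forall K' : {set C}, K' \subset A -> #|K'|%:R * m <= Nw w K'.
  move=> K' sK'; case: (boolP (K' == set0)) => [/eqP ->|K'n0].
    by rewrite cards0 mul0r; apply: sumr_ge0 => y _; rewrite /w ler0n.
  have := Kmin K'; rewrite K'n0 sK' => /(_ isT).
  by rewrite /ratio -/m ler_pdivlMr ?cardpos // mulrC.
have [F [Fp Fz Fs Fd]] := @gale R C #|A| A w (fun _ => m) (leqnn _)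
  ltac:(by move=> z; rewrite /w ler0n)
  ltac:(by move=> K' sK'; rewrite sumr_const -mulr_natl; apply: hmin).
have hF : in_family B A F by split.
exists m; split.
  split.
    move=> F' v hF' [_ hv].
    rewrite /m /ratio ler_pdivlMr ?cardpos // mulr_natr -sumr_const.
    have h := supp_le _ _ _ _ _ _ hF' KA.
    have h' : \sum_(i in K) v <= \sum_(c in K) Supp F' c.
      by apply: ler_sum => c cK; apply: hv; exact: (subsetP KA).
    exact: le_trans h' h.
  move=> m' hm'.
  case: (@arg_minP _ _ _ a (fun c => c \in A) (Supp F) aA) => c cA cmin.
  apply: (le_trans (Fd c cA)); apply: (hm' F) => //.
  by split; [exists c | ].
exists K; split => //.
move=> F' c [hF' hopt] cK.
have e : \sum_(x in K) (Supp F' x - m) = \sum_(x in K) Supp F' x - #|K|%:R * m.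
  by rewrite sumrB sumr_const mulr_natl.
have hN : Nw w K = #|K|%:R * m.
  rewrite /m /ratio mulrC divfK //; rewrite lt0r_neq0 // cardpos //.
have h1 : Supp F' c - m <= \sum_(x in K) (Supp F' x - m).
  rewrite (bigD1 c) //= lerDl sumr_ge0 // => x /andP [xK _].
  by rewrite subr_ge0 hopt // (subsetP KA).
have h2 := hopt c (subsetP KA c cK).
have h3 := supp_le _ _ _ _ _ _ hF' KA.
rewrite -/w in h3; lra.
Qed.
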